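(* Let $\beta\in(-\infty,0)\cup(0,1]$, $G_\beta(u)=\frac{\beta}{|\beta|}u^\beta$, and $u_0\in\ell^\infty_+(\mathbb{Z})$ with $0<\delta\le u_0\le C$. Then there exists a solution $u:[0,\infty)\to\ell^\infty_+(\mathbb{Z})$ of $\partial_tu=\Delta G_\beta(u)$, $u(0)=u_0$, with $\delta\le u(t,\cdot)\le C$ for all $t\ge0$.
   Context: $\Delta v(k)=v(k-1)-2v(k)+v(k+1)$. A solution is a map $u\in C^0([0,\infty);\ell^\infty_+(\mathbb{Z}))$ with $u(0)=u_0$ such that for each $k$, $u(\cdot,k)\in C^1((0,\infty);(0,\infty))$ and $\frac{d}{dt}u(t,k)=\Delta G_\beta(u)(t,k)$ for all $t>0$. *)

(* Defs.v *)
From Stdlib Require Import Reals ZArith.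
From Coquelicot Require Import Coquelicot.
Open Scope R_scope.

Definition linf_plus (v : Z -> R) : Prop :=
  (forall k, 0 <= v k) /\ exists M, forall k, Rabs (v k) <= M.

Definition dlap (v : Z -> R) (k : Z) : R :=
  v (k - 1)%Z - 2 * v k + v (k + 1)%Z.

Definition G (beta x : R) : R := (beta / Rabs beta) * Rpower x beta.

Definition cont_linf_at (u : R -> Z -> R) (t0 : R) : Prop :=
  forall eps, 0 < eps -> exists d, 0 < d /\
    forall t, 0 <= t -> Rabs (t - t0) < d ->
      forall k, Rabs (u t k - u t0 k) <= eps.

Definition is_solution (beta : R) (u0 : Z -> R) (u : R -> Z -> R) : Prop :=
  (forall t, 0 <= t -> linf_plus (u t)) /\
  (forall t0, 0 <= t0 -> cont_linf_at u t0) /\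
  u 0 = u0 /\
  (forall k t, 0 < t ->
     0 < u t k /\
     is_derive (fun s => u s k) t (dlap (fun j => G beta (u t j)) k) /\
     continuous (fun s => Derive (fun s' => u s' k) s) t).

(* Main.v *)
Require Import Defs.
From Stdlib Require Import Reals ZArith Lra Lia FunctionalExtensionality.
From Coquelicot Require Import Coquelicot.
Open Scope R_scope.

Lemma exp_le_mono x y : x <= y -> exp x <= exp y.
Proof. intros H; destruct (Rle_lt_or_eq_dec _ _ H) as [h|h]; [apply Rlt_le, exp_increasing; auto| subst; lra]. Qed.

Lemma mono0 (g dg : R -> R) (t : R) : 0 <= t ->
  (forall x, 0 <= x <= t -> is_derive g x (dg x)) ->
  (forall x, 0 <= x <= t -> 0 <= dg x) -> g 0 <= g t.
Proof.
  intros Ht Hd Hp.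
  destruct (MVT_gen g 0 t dg) as [c [Hc Heq]].
  - intros x Hx. rewrite Rmin_left in Hx by lra. rewrite Rmax_right in Hx by lra.
    apply Hd; lra.
  - intros x Hx. rewrite Rmin_left in Hx by lra. rewrite Rmax_right in Hx by lra.
    apply continuity_pt_filterlim. apply (ex_derive_continuous (K:=R_AbsRing) (V:=R_NormedModule)).
    eexists. apply Hd; lra.
  - rewrite Rmin_left in Hc by lra. rewrite Rmax_right in Hc by lra.
    assert (0 <= dg c * (t - 0)) by (apply Rmult_le_pos; [apply Hp; lra| lra]).
    lra.
Qed.

Lemma lip_cont (f : R -> R) (x K : R) :
  (forall y, Rabs (f y - f x) <= K * Rabs (y - x)) -> continuous f x.
Proof.
  intros H. apply (proj1 (continuity_pt_filterlim f x)). apply continuity_pt_locally.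
  intros eps.
  assert (HK : 0 < Rabs K + 1) by (pose proof (Rabs_pos K); lra).
  exists (mkposreal (eps / (Rabs K + 1)) (Rdiv_lt_0_compat _ _ (cond_pos eps) HK)).
  intros y Hy. unfold ball in Hy; simpl in Hy. unfold AbsRing_ball, abs, minus, plus, opp in Hy; simpl in Hy.
  eapply Rle_lt_trans; [apply H|].
  pose proof (Rabs_pos (y - x)).
  apply Rle_lt_trans with (Rabs K * Rabs (y - x)).
  - apply Rmult_le_compat_r; [lra| apply Rle_abs].
  - apply Rle_lt_trans with ((Rabs K + 1) * Rabs (y + - x)).
    + replace (y - x) with (y + - x) by ring. pose proof (Rabs_pos (y + - x)). nra.
    + apply Rmult_lt_reg_l with (/ (Rabs K + 1)). apply Rinv_0_lt_compat; lra.
      rewrite <- Rmult_assoc, Rinv_l by lra. rewrite Rmult_1_l.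
      unfold Rdiv in Hy. rewrite Rmult_comm. lra.
Qed.

Lemma le_geom (x y K : R) : (forall n, x <= y + K * (/2)^n) -> x <= y.
Proof.
  intros H.
  assert (H0 : is_lim_seq (fun n => K * (/2)^n) (Rbar_mult K 0)).
  { apply is_lim_seq_scal_l. apply is_lim_seq_geom. rewrite Rabs_pos_eq; lra. }
  simpl in H0. rewrite Rmult_0_r in H0.
  assert (Hl : is_lim_seq (fun n => y + K * (/2)^n) (y + 0)).
  { apply is_lim_seq_plus'. apply is_lim_seq_const. exact H0. }
  rewrite Rplus_0_r in Hl.
  assert (Rbar_le x y).
  { eapply is_lim_seq_le_loc; [| apply is_lim_seq_const | apply Hl].
    exists 0%nat. intros n _. apply H. }
  exact H1.
Qed.

Lemma pow_half_pos n : 0 < (/2)^n.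
Proof. apply pow_lt; lra. Qed.

Lemma geom_cauchy (x : nat -> R) (K : R) :
  (forall n, Rabs (x (S n) - x n) <= K * (/2)^n) ->
  exists l, is_lim_seq x l /\ forall n, Rabs (l - x n) <= 2 * K * (/2)^n.
Proof.
  intros H.
  assert (HK : 0 <= K).
  { specialize (H 0%nat). simpl in H. pose proof (Rabs_pos (x 1%nat - x 0%nat)). lra. }
  assert (Hp : forall n p, Rabs (x (p + n)%nat - x n) <= 2 * K * (/2)^n * (1 - (/2)^p)).
  { intros n p. induction p.
    - simpl. replace (x n - x n) with 0 by ring. rewrite Rabs_R0. lra.
    - replace (S p + n)%nat with (S (p + n)) by lia.
      eapply Rle_trans. 
      replace (x (S (p + n)) - x n) with ((x (S (p+n)) - x (p+n)%nat) + (x (p + n)%nat - x n)) by ring.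
      apply Rabs_triang.
      specialize (H (p + n)%nat). rewrite pow_add in H.
      simpl. nra. }
  assert (Hc : ex_finite_lim_seq x).
  { apply ex_lim_seq_cauchy_corr. intros eps.
    destruct (pow_lt_1_zero (/2)) with (y := eps / (4 * K + 1)) as [N HN].
    { rewrite Rabs_pos_eq; lra. }
    { apply Rdiv_lt_0_compat; [apply cond_pos| lra]. }
    exists N. intros n m Hn Hm.
    assert (Hb : forall n, (N <= n)%nat -> Rabs (x n - x N) <= 2 * K * (/2)^N).
    { intros q Hq. replace q with ((q - N) + N)%nat by lia.
      eapply Rle_trans; [apply Hp|]. pose proof (pow_half_pos N). pose proof (pow_half_pos (q - N)).
      assert (0 <= 2 * K * (/2)^N) by (apply Rmult_le_pos; lra).
      assert (0 <= 2 * K * (/2)^N * (/2)^(q-N)) by (apply Rmult_le_pos; lra). lra. }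
    specialize (HN N (le_n _)). rewrite Rabs_pos_eq in HN by (apply Rlt_le, pow_half_pos).
    pose proof (cond_pos eps). pose proof (pow_half_pos N).
    assert (HN2 : (4*K+1) * (/2)^N < eps).
    { apply Rmult_lt_compat_l with (r := 4*K+1) in HN; [|lra].
      unfold Rdiv in HN. rewrite (Rmult_comm eps), <- Rmult_assoc, Rinv_r, Rmult_1_l in HN by lra. exact HN. }
    assert (2 * K * (/2)^N < eps / 2) by nra.
    replace (x n - x m) with ((x n - x N) - (x m - x N)) by ring.
    eapply Rle_lt_trans; [apply Rabs_triang|]. rewrite Rabs_Ropp.
    pose proof (Hb n Hn). pose proof (Hb m Hm). lra. }
  apply Lim_seq_correct' in Hc.
  set (l := real (Lim_seq x)) in *.
  exists l. split; [exact Hc|].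
  intros n.
  assert (Hev : forall m, (n <= m)%nat -> x n - 2*K*(/2)^n <= x m <= x n + 2*K*(/2)^n).
  { intros m Hm. replace m with ((m - n) + n)%nat by lia. specialize (Hp n (m - n)%nat).
    apply Rabs_le_between' in Hp. pose proof (pow_half_pos n). pose proof (pow_half_pos (m - n)). 
    assert (0 <= 2 * K * (/2)^n) by (apply Rmult_le_pos; lra).
    assert (0 <= 2 * K * (/2)^n * (/2)^(m-n)) by (apply Rmult_le_pos; lra).
    assert (E : 2 * K * (/2)^n * (1 - (/2)^(m-n)) = 2 * K * (/2)^n - 2 * K * (/2)^n * (/2)^(m-n)) by ring.
    rewrite E in Hp. split; lra. }
  assert (H1 : Rbar_le (x n - 2*K*(/2)^n) l).
  { eapply is_lim_seq_le_loc; [| apply is_lim_seq_const | apply Hc]. exists n. intros m Hm. apply Hev; lia. }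
  assert (H2 : Rbar_le l (x n + 2*K*(/2)^n)).
  { eapply is_lim_seq_le_loc; [| apply Hc | apply is_lim_seq_const]. exists n. intros m Hm. apply Hev; lia. }
  simpl in H1, H2. clearbody l. apply Rabs_le. simpl. lra.
Qed.

Lemma is_derive_cexp (C mu x : R) : is_derive (fun y => C * exp (mu * y)) x (C * mu * exp (mu * x)).
Proof. auto_derive; [auto| ring]. Qed.

Lemma deriv_RInt (f : R -> R) x : (forall s, continuous f s) -> is_derive (fun y => RInt f 0 y) x (f x).
Proof.
  intros Hc. apply (is_derive_RInt f (fun y => RInt f 0 y) 0 x).
  - apply filter_forall. intros y. apply (RInt_correct (V:=R_CompleteNormedModule)). apply (ex_RInt_continuous (V:=R_CompleteNormedModule)). intros; apply Hc.
  - apply Hc.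
Qed.

Lemma int_bound (f : R -> R) t B mu : 0 <= t -> 0 < mu -> (forall s, continuous f s) ->
  (forall s, 0 <= s <= t -> Rabs (f s) <= B * exp (mu * s)) ->
  Rabs (RInt f 0 t) <= B / mu * exp (mu * t).
Proof.
  intros Ht Hmu Hc Hb.
  assert (HB : 0 <= B).
  { specialize (Hb 0 (conj (Rle_refl 0) Ht)). rewrite Rmult_0_r, exp_0 in Hb.
    pose proof (Rabs_pos (f 0)). lra. }
  assert (H0 : RInt f 0 0 = 0) by (exact (RInt_point (V:=R_CompleteNormedModule) 0 f)).
  assert (E : forall x, B / mu * mu * exp (mu * x) = B * exp (mu * x)) by (intros; field; lra).
  apply Rabs_le; split.
  - pose proof (mono0 (fun x => B / mu * exp (mu * x) + RInt f 0 x) (fun x => B * exp (mu * x) + f x) t Ht) as M.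
    simpl in M. rewrite H0, Rmult_0_r, exp_0 in M.
    assert (B / mu * 1 + 0 <= B / mu * exp (mu * t) + RInt f 0 t).
    { apply M.
      - intros x _. rewrite <- E. apply (is_derive_plus (K:=R_AbsRing) (V:=R_NormedModule)). apply is_derive_cexp. apply deriv_RInt; auto.
      - intros x Hx. specialize (Hb x Hx). apply Rabs_le_between in Hb. lra. }
    assert (0 <= B / mu) by (apply Rmult_le_pos; [lra| apply Rlt_le, Rinv_0_lt_compat; lra]).
    lra.
  - pose proof (mono0 (fun x => B / mu * exp (mu * x) - RInt f 0 x) (fun x => B * exp (mu * x) - f x) t Ht) as M.
    simpl in M. rewrite H0, Rmult_0_r, exp_0 in M.
    assert (B / mu * 1 - 0 <= B / mu * exp (mu * t) - RInt f 0 t).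
    { apply M.
      - intros x _. rewrite <- E. apply (is_derive_minus (K:=R_AbsRing) (V:=R_NormedModule)). apply is_derive_cexp. apply deriv_RInt; auto.
      - intros x Hx. specialize (Hb x Hx). apply Rabs_le_between in Hb. lra. }
    assert (0 <= B / mu) by (apply Rmult_le_pos; [lra| apply Rlt_le, Rinv_0_lt_compat; lra]).
    lra.
Qed.

Definition Hop (F : R -> R) (M : R) (w : Z -> R) (k : Z) : R :=
  F (w (k-1)%Z) + F (w (k+1)%Z) + 2*M*w k - 2*F (w k).

Definition gint (F : R -> R) (M : R) (w : R -> Z -> R) (k : Z) (s : R) : R :=
  exp (2*M*s) * Hop F M (w s) k.

Definition phi (F : R -> R) (M : R) (u0 : Z -> R) (w : R -> Z -> R) (k : Z) (x : R) : R :=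
  exp (-(2*M*x)) * (u0 k + RInt (gint F M w k) 0 x).

Definition TL (w : R -> Z -> R) (K : R) : Prop :=
  forall s s' j, Rabs (w s j - w s' j) <= K * Rabs (s - s').

Definition HFp (F : R -> R) (M : R) : Prop :=
  forall x y, x <= y -> 0 <= F y - F x <= M*(y-x).

Lemma F_lip F M x y : HFp F M -> Rabs (F x - F y) <= M * Rabs (x - y).
Proof.
  intros HF. destruct (Rle_dec x y) as [h|h].
  - specialize (HF x y h). rewrite (Rabs_minus_sym x), (Rabs_minus_sym (F x)).
    rewrite !Rabs_pos_eq by lra. lra.
  - assert (y <= x) by lra. specialize (HF y x H).
    rewrite !Rabs_pos_eq by lra. lra.
Qed.

Lemma Hop_lip F M w w' k A : HFp F M -> 0 <= M ->
  (forall j, Rabs (w j - w' j) <= A) -> Rabs (Hop F M w k - Hop F M w' k) <= 6*M*A.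
Proof.
  intros HF HM Hw. unfold Hop.
  pose proof (F_lip F M (w (k-1)%Z) (w' (k-1)%Z) HF).
  pose proof (F_lip F M (w (k+1)%Z) (w' (k+1)%Z) HF).
  pose proof (F_lip F M (w k) (w' k) HF).
  pose proof (Hw (k-1)%Z). pose proof (Hw (k+1)%Z). pose proof (Hw k).
  assert (M * Rabs (w (k - 1)%Z - w' (k - 1)%Z) <= M * A) by (apply Rmult_le_compat_l; lra).
  assert (M * Rabs (w (k + 1)%Z - w' (k + 1)%Z) <= M * A) by (apply Rmult_le_compat_l; lra).
  assert (M * Rabs (w k - w' k) <= M * A) by (apply Rmult_le_compat_l; lra).
  apply Rabs_le_between in H4.
  assert (M * (w k - w' k) <= M * A) by (apply Rmult_le_compat_l; lra).
  assert (M * -A <= M * (w k - w' k)) by (apply Rmult_le_compat_l; lra).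
  apply Rabs_le.
  apply Rabs_le_between in H. apply Rabs_le_between in H0. apply Rabs_le_between in H1.
  split; lra.
Qed.

Lemma Hop_mono F M w w' k : HFp F M ->
  (forall j, w j <= w' j) -> Hop F M w k <= Hop F M w' k.
Proof.
  intros HF Hw. unfold Hop.
  pose proof (HF _ _ (Hw (k-1)%Z)). pose proof (HF _ _ (Hw (k+1)%Z)). pose proof (HF _ _ (Hw k)).
  lra.
Qed.

Lemma Hop_const F M c k : Hop F M (fun _ => c) k = 2*M*c.
Proof. unfold Hop. ring. Qed.

Lemma Hop_TL_cont F M w K k s : HFp F M -> 0 <= M -> TL w K ->
  continuous (fun s => Hop F M (w s) k) s.
Proof.
  intros HF HM Hw. apply lip_cont with (K := 6*M*K).
  intros y. rewrite Rmult_assoc. apply Hop_lip; auto.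
Qed.

Lemma exp_cont c s : continuous (fun x => exp (c * x)) s.
Proof. apply (ex_derive_continuous (K:=R_AbsRing) (V:=R_NormedModule)). auto_derive; auto. Qed.

Lemma gint_cont F M w K k s : HFp F M -> 0 <= M -> TL w K ->
  continuous (gint F M w k) s.
Proof.
  intros HF HM Hw. unfold gint.
  apply (continuous_mult (U:=R_UniformSpace) (K:=R_AbsRing) (fun x => exp (2*M*x)) (fun s => Hop F M (w s) k)).
  apply exp_cont. eapply Hop_TL_cont; eauto.
Qed.

Lemma phi_deriv F M u0 w K k x : HFp F M -> 0 <= M -> TL w K ->
  is_derive (phi F M u0 w k) x (-(2*M) * phi F M u0 w k x + Hop F M (w x) k).
Proof.
  intros HF HM Hw.
  assert (H1 : is_derive (fun y => exp (-(2*M*y))) x (-(2*M) * exp(-(2*M*x)))).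
  { auto_derive; auto. ring. }
  assert (H2 : is_derive (fun y => u0 k + RInt (gint F M w k) 0 y) x (0 + gint F M w k x)).
  { apply (is_derive_plus (K:=R_AbsRing) (V:=R_NormedModule)). apply (is_derive_const (K:=R_AbsRing) (V:=R_NormedModule)).
    apply deriv_RInt. intros; eapply gint_cont; eauto. }
  pose proof (is_derive_mult _ _ _ _ _ H1 H2 (fun n m => Rmult_comm n m)) as H3.
  unfold phi.
  replace (-(2*M) * (exp (-(2*M*x)) * (u0 k + RInt (gint F M w k) 0 x)) + Hop F M (w x) k)
    with (plus (mult (-(2*M) * exp(-(2*M*x))) (u0 k + RInt (gint F M w k) 0 x)) (mult (exp (-(2*M*x))) (0 + gint F M w k x))).
  exact H3.
  unfold plus, mult; simpl. unfold gint. rewrite exp_Ropp.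
  field. apply Rgt_not_eq, exp_pos.
Qed.

Lemma is_derive_eq (f : R -> R) x l l' : is_derive f x l -> l = l' -> is_derive f x l'.
Proof. intros H E; subst; auto. Qed.

Lemma RInt0 (f : R -> R) : RInt f 0 0 = 0.
Proof. exact (RInt_point (V:=R_CompleteNormedModule) 0 f). Qed.

Lemma phi_bounds F M a b u0 w K k t : HFp F M -> 0 < M -> TL w K ->
  (forall k, a <= u0 k <= b) -> (forall s j, a <= w s j <= b) -> 0 <= t ->
  a <= phi F M u0 w k t <= b.
Proof.
  intros HF HM Hw Hu0 Hwb Ht.
  assert (HI : forall x, is_derive (fun y => u0 k + RInt (gint F M w k) 0 y) x (gint F M w k x)).
  { intros x. eapply is_derive_eq.
    apply (is_derive_plus (K:=R_AbsRing) (V:=R_NormedModule)). apply (is_derive_const (K:=R_AbsRing) (V:=R_NormedModule)).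
    apply deriv_RInt. intros; eapply gint_cont; eauto; lra.
    unfold plus, zero; simpl. ring. }
  assert (Hlo : forall x, 2*M*a <= Hop F M (w x) k).
  { intros x. rewrite <- (Hop_const F M a k). apply Hop_mono; auto. intros j; apply Hwb. }
  assert (Hhi : forall x, Hop F M (w x) k <= 2*M*b).
  { intros x. rewrite <- (Hop_const F M b k). apply Hop_mono; auto. intros j; apply Hwb. }
  pose proof (exp_pos (2*M*t)) as Ep.
  unfold phi. rewrite exp_Ropp.
  split.
  - pose proof (mono0 (fun x => u0 k + RInt (gint F M w k) 0 x - a * exp(2*M*x))
                     (fun x => gint F M w k x - a*(2*M)*exp(2*M*x)) t Ht) as Mo.
    simpl in Mo. rewrite RInt0, Rmult_0_r, exp_0 in Mo.
    assert (u0 k + 0 - a * 1 <= u0 k + RInt (gint F M w k) 0 t - a * exp (2 * M * t)).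
    { apply Mo.
      - intros x _. apply (is_derive_minus (K:=R_AbsRing) (V:=R_NormedModule)). apply HI. apply is_derive_cexp.
      - intros x _. unfold gint. pose proof (Hlo x). pose proof (exp_pos (2*M*x)).
        assert (0 <= exp (2*M*x) * (Hop F M (w x) k - 2*M*a)) by (apply Rmult_le_pos; lra).
        lra. }
    pose proof (Hu0 k).
    apply Rmult_le_reg_l with (exp (2*M*t)); auto.
    rewrite <- Rmult_assoc, Rinv_r, Rmult_1_l by lra. lra.
  - pose proof (mono0 (fun x => b * exp(2*M*x) - (u0 k + RInt (gint F M w k) 0 x))
                     (fun x => b*(2*M)*exp(2*M*x) - gint F M w k x) t Ht) as Mo.
    simpl in Mo. rewrite RInt0, Rmult_0_r, exp_0 in Mo.
    assert (b * 1 - (u0 k + 0) <= b * exp (2 * M * t) - (u0 k + RInt (gint F M w k) 0 t)).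
    { apply Mo.
      - intros x _. apply (is_derive_minus (K:=R_AbsRing) (V:=R_NormedModule)). apply is_derive_cexp. apply HI.
      - intros x _. unfold gint. pose proof (Hhi x). pose proof (exp_pos (2*M*x)).
        assert (0 <= exp (2*M*x) * (2*M*b - Hop F M (w x) k)) by (apply Rmult_le_pos; lra).
        lra. }
    pose proof (Hu0 k).
    apply Rmult_le_reg_l with (exp (2*M*t)); auto.
    rewrite <- Rmult_assoc, Rinv_r, Rmult_1_l by lra. lra.
Qed.

Lemma Rmax_lip t s : Rabs (Rmax 0 t - Rmax 0 s) <= Rabs (t - s).
Proof.
  unfold Rmax. destruct (Rle_dec 0 t), (Rle_dec 0 s); unfold Rabs;
  repeat destruct (Rcase_abs _); lra.
Qed.

Lemma phi_lip F M a b u0 w K k t s : HFp F M -> 0 < M -> TL w K ->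
  (forall k, a <= u0 k <= b) -> (forall s j, a <= w s j <= b) ->
  Rabs (phi F M u0 w k (Rmax 0 t) - phi F M u0 w k (Rmax 0 s)) <= 2*M*(b-a) * Rabs (t - s).
Proof.
  intros HF HM Hw Hu0 Hwb.
  set (t' := Rmax 0 t). set (s' := Rmax 0 s).
  assert (Ht' : 0 <= t') by apply Rmax_l. assert (Hs' : 0 <= s') by apply Rmax_l.
  destruct (MVT_gen (phi F M u0 w k) s' t' (fun x => -(2*M) * phi F M u0 w k x + Hop F M (w x) k)) as [c [Hc E]].
  - intros x _. eapply phi_deriv; eauto; lra.
  - intros x _. apply continuity_pt_filterlim. apply (ex_derive_continuous (K:=R_AbsRing) (V:=R_NormedModule)).
    eexists. eapply phi_deriv; eauto; lra.
  - assert (H0c : 0 <= c).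
    { destruct Hc as [Hc _]. eapply Rle_trans; [|exact Hc]. apply Rmin_glb; lra. }
    rewrite E. rewrite Rabs_mult.
    pose proof (phi_bounds F M a b u0 w K k c HF HM Hw Hu0 Hwb H0c).
    assert (Hlo : 2*M*a <= Hop F M (w c) k).
    { rewrite <- (Hop_const F M a k). apply Hop_mono; auto. intros j; apply Hwb. }
    assert (Hhi : Hop F M (w c) k <= 2*M*b).
    { rewrite <- (Hop_const F M b k). apply Hop_mono; auto. intros j; apply Hwb. }
    apply Rmult_le_compat.
    + apply Rabs_pos.
    + apply Rabs_pos.
    + apply Rabs_le. nra.
    + apply Rmax_lip.
Qed.

Lemma phi_close F M u0 w1 w2 K1 K2 D k t : HFp F M -> 0 < M -> TL w1 K1 -> TL w2 K2 ->
  (forall s j, 0 <= s -> Rabs (w1 s j - w2 s j) <= D * exp (12*M*s)) -> 0 <= t ->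
  Rabs (phi F M u0 w1 k t - phi F M u0 w2 k t) <= D / 2 * exp (12*M*t).
Proof.
  intros HF HM H1 H2 Hd Ht.
  assert (C1 : forall s, continuous (gint F M w1 k) s) by (intros; eapply gint_cont; eauto; lra).
  assert (C2 : forall s, continuous (gint F M w2 k) s) by (intros; eapply gint_cont; eauto; lra).
  assert (E : phi F M u0 w1 k t - phi F M u0 w2 k t =
              exp (-(2*M*t)) * RInt (fun s => gint F M w1 k s - gint F M w2 k s) 0 t).
  { unfold phi.
    rewrite (RInt_minus (V:=R_CompleteNormedModule) (gint F M w1 k) (gint F M w2 k)).
    - unfold minus, plus, opp; simpl. ring.
    - apply (ex_RInt_continuous (V:=R_CompleteNormedModule)); auto.
    - apply (ex_RInt_continuous (V:=R_CompleteNormedModule)); auto. }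
  rewrite E, Rabs_mult, Rabs_pos_eq by (apply Rlt_le, exp_pos).
  assert (HB : Rabs (RInt (fun s => gint F M w1 k s - gint F M w2 k s) 0 t)
               <= (6*M*D) / (14*M) * exp (14*M*t)).
  { apply int_bound; auto; try lra.
    - intros s. apply (continuous_minus (U:=R_UniformSpace) (V:=R_NormedModule)); auto.
    - intros s Hs. unfold gint. rewrite <- Rmult_minus_distr_l, Rabs_mult, Rabs_pos_eq by (apply Rlt_le, exp_pos).
      replace (14 * M * s) with (2*M*s + 12*M*s) by ring. rewrite exp_plus.
      assert (Rabs (Hop F M (w1 s) k - Hop F M (w2 s) k) <= 6*M*(D * exp (12*M*s))).
      { apply Hop_lip; auto; try lra. intros j; apply Hd; lra. }
      pose proof (exp_pos (2*M*s)).
      replace (6 * M * D * (exp (2 * M * s) * exp (12 * M * s))) with (exp (2*M*s) * (6*M*(D * exp (12*M*s)))) by ring.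
      apply Rmult_le_compat_l; lra. }
  assert (HD : 0 <= D).
  { pose proof (Hd 0 k (Rle_refl 0)). rewrite Rmult_0_r, exp_0 in H. pose proof (Rabs_pos (w1 0 k - w2 0 k)). lra. }
  pose proof (exp_pos (-(2*M*t))).
  eapply Rle_trans. apply Rmult_le_compat_l. lra. exact HB.
  replace (14 * M * t) with (2*M*t + 12*M*t) by ring. rewrite exp_plus.
  rewrite exp_Ropp.
  pose proof (exp_pos (2*M*t)). pose proof (exp_pos (12*M*t)).
  replace (/ exp (2 * M * t) * (6 * M * D / (14 * M) * (exp (2 * M * t) * exp (12 * M * t))))
    with (3/7 * D * exp (12*M*t)) by (field; lra).
  assert (0 <= D * exp (12*M*t)) by (apply Rmult_le_pos; lra).
  lra.
Qed.

Fixpoint It F M u0 (n : nat) : R -> Z -> R :=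
  match n with
  | O => fun _ k => u0 k
  | S n => fun t k => phi F M u0 (It F M u0 n) k (Rmax 0 t)
  end.

Lemma It_inv F M a b u0 : HFp F M -> 0 < M -> (forall k, a <= u0 k <= b) ->
  forall n, (forall t k, a <= It F M u0 n t k <= b) /\ TL (It F M u0 n) (2*M*(b-a)).
Proof.
  intros HF HM Hu0. assert (Hab : a <= b) by (destruct (Hu0 0%Z); lra).
  induction n as [|n [IH1 IH2]].
  - split; simpl; auto. intros s s' j. replace (u0 j - u0 j) with 0 by ring. rewrite Rabs_R0.
    apply Rmult_le_pos; [|apply Rabs_pos]. nra.
  - split.
    + intros t k. simpl. eapply phi_bounds; eauto. apply Rmax_l.
    + intros s s' j. simpl. eapply phi_lip; eauto.
Qed.

Lemma Rmax0_idem t : Rmax 0 (Rmax 0 t) = Rmax 0 t.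
Proof. apply Rmax_right, Rmax_l. Qed.

Lemma It_Rmax F M u0 n t k : It F M u0 n t k = It F M u0 n (Rmax 0 t) k.
Proof. destruct n; simpl; auto. rewrite Rmax0_idem. auto. Qed.

Lemma It_0 F M u0 n k : It F M u0 n 0 k = u0 k.
Proof.
  destruct n; simpl; auto. rewrite Rmax_left by lra. unfold phi. rewrite RInt0, Rmult_0_r, Ropp_0, exp_0. ring.
Qed.

Lemma It_diff F M a b u0 : HFp F M -> 0 < M -> (forall k, a <= u0 k <= b) ->
  forall n t k, 0 <= t -> Rabs (It F M u0 (S n) t k - It F M u0 n t k) <= (b-a) * (/2)^n * exp (12*M*t).
Proof.
  intros HF HM Hu0 n. induction n as [|n IH]; intros t k Ht.
  - destruct (It_inv F M a b u0 HF HM Hu0 1) as [B1 _].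
    destruct (It_inv F M a b u0 HF HM Hu0 0) as [B0 _].
    pose proof (B1 t k). pose proof (B0 t k).
    assert (1 <= exp (12*M*t)).
    { rewrite <- exp_0. apply exp_le_mono. nra. }
    simpl pow. rewrite Rmult_1_r. apply Rabs_le. split; nra.
  - change (It F M u0 (S (S n)) t k) with (phi F M u0 (It F M u0 (S n)) k (Rmax 0 t)).
    change (It F M u0 (S n) t k) with (phi F M u0 (It F M u0 n) k (Rmax 0 t)).
    rewrite Rmax_right by lra.
    eapply Rle_trans.
    + eapply phi_close; eauto.
      * apply (It_inv F M a b u0 HF HM Hu0 (S n)).
      * apply (It_inv F M a b u0 HF HM Hu0 n).
    + simpl pow. right. field.
Qed.

Definition ulim F M u0 (t : R) (k : Z) : R := real (Lim_seq (fun n => It F M u0 n t k)).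

Lemma ulim_conv F M a b u0 : HFp F M -> 0 < M -> (forall k, a <= u0 k <= b) ->
  forall t k n, 0 <= t -> Rabs (ulim F M u0 t k - It F M u0 n t k) <= 2 * ((b-a) * exp (12*M*t)) * (/2)^n.
Proof.
  intros HF HM Hu0 t k n Ht.
  destruct (geom_cauchy (fun n => It F M u0 n t k) ((b-a) * exp (12*M*t))) as [l [Hl Hb]].
  { intros m. eapply Rle_trans. apply (It_diff F M a b u0 HF HM Hu0 m t k Ht). right; ring. }
  unfold ulim. rewrite (is_lim_seq_unique _ _ Hl). simpl. apply Hb.
Qed.

Lemma ulim_Rmax F M u0 t k : ulim F M u0 t k = ulim F M u0 (Rmax 0 t) k.
Proof. unfold ulim. f_equal. apply Lim_seq_ext. intros n. apply It_Rmax. Qed.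

Lemma ulim_0 F M u0 k : ulim F M u0 0 k = u0 k.
Proof. unfold ulim. rewrite (Lim_seq_ext _ (fun _ => u0 k)). rewrite Lim_seq_const. reflexivity.
  intros n. apply It_0. Qed.

Lemma abstract_sol F M a b u0 : HFp F M -> 0 < M -> (forall k, a <= u0 k <= b) ->
  exists u : R -> Z -> R, (forall t k, a <= u t k <= b) /\ TL u (2*M*(b-a)) /\
    (forall k, u 0 k = u0 k) /\
    (forall k t, 0 < t -> is_derive (fun s => u s k) t (-(2*M) * u t k + Hop F M (u t) k) /\
                 continuous (fun s => Derive (fun s' => u s' k) s) t).
Proof.
  intros HF HM Hu0.
  assert (Hab : a <= b) by (destruct (Hu0 0%Z); lra).
  pose proof (It_inv F M a b u0 HF HM Hu0) as Inv.
  pose proof (ulim_conv F M a b u0 HF HM Hu0) as Cv.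
  set (u := ulim F M u0).
  assert (Hb : forall t k, a <= u t k <= b).
  { intros t k. unfold u. rewrite ulim_Rmax. set (t' := Rmax 0 t).
    assert (Ht' : 0 <= t') by apply Rmax_l.
    split.
    - apply le_geom with (K := 2 * ((b-a) * exp (12*M*t'))). intros n.
      pose proof (Cv t' k n Ht'). destruct (Inv n) as [B _]. pose proof (B t' k).
      apply Rabs_le_between' in H. lra.
    - apply le_geom with (K := 2 * ((b-a) * exp (12*M*t'))). intros n.
      pose proof (Cv t' k n Ht'). destruct (Inv n) as [B _]. pose proof (B t' k).
      apply Rabs_le_between' in H. lra. }
  assert (HTL : TL u (2*M*(b-a))).
  { intros s s' j. unfold u. rewrite (ulim_Rmax _ _ _ s), (ulim_Rmax _ _ _ s').
    eapply Rle_trans; [| apply Rmult_le_compat_l; [nra| apply Rmax_lip]].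
    set (t1 := Rmax 0 s). set (t2 := Rmax 0 s').
    assert (0 <= t1) by apply Rmax_l. assert (0 <= t2) by apply Rmax_l.
    apply le_geom with (K := 2 * ((b-a) * exp (12*M*t1)) + 2 * ((b-a) * exp (12*M*t2))). intros n.
    pose proof (Cv t1 j n H). pose proof (Cv t2 j n H0).
    destruct (Inv n) as [_ T]. pose proof (T t1 t2 j).
    replace (ulim F M u0 t1 j - ulim F M u0 t2 j) with
      ((ulim F M u0 t1 j - It F M u0 n t1 j) + (It F M u0 n t1 j - It F M u0 n t2 j) - (ulim F M u0 t2 j - It F M u0 n t2 j)) by ring.
    eapply Rle_trans. apply Rabs_triang. rewrite Rabs_Ropp.
    eapply Rle_trans. apply Rplus_le_compat_r. apply Rabs_triang. lra. }
  assert (HI : forall t k, 0 <= t -> u t k = phi F M u0 u k t).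
  { intros t k Ht. 
    assert (Rabs (u t k - phi F M u0 u k t) <= 0).
    { apply le_geom with (K := 2 * ((b-a) * exp (12*M*t))). intros n.
      pose proof (Cv t k (S n) Ht).
      assert (E : It F M u0 (S n) t k = phi F M u0 (It F M u0 n) k t).
      { simpl. rewrite Rmax_right by lra. reflexivity. }
      assert (Rabs (phi F M u0 (It F M u0 n) k t - phi F M u0 u k t) <= (2 * (b-a) * (/2)^n) / 2 * exp (12*M*t)).
      { eapply phi_close; eauto. apply (Inv n).
        intros s j Hs. rewrite Rabs_minus_sym. eapply Rle_trans. apply Cv; auto. right; ring. }
      replace (u t k - phi F M u0 u k t) with ((u t k - It F M u0 (S n) t k) + (phi F M u0 (It F M u0 n) k t - phi F M u0 u k t)) by (rewrite E; ring).
      eapply Rle_trans. apply Rabs_triang. simpl pow in H.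
      set (p := (/2)^n) in *. set (e := exp (12*M*t)) in *.
      replace (2 * ((b - a) * e) * (/ 2 * p)) with ((b-a)*e*p) in H by field.
      replace (2 * (b - a) * p / 2 * e) with ((b-a)*e*p) in H0 by field.
      replace (0 + 2 * ((b - a) * e) * p) with (2 * ((b-a)*e*p)) by ring.
      unfold u in *. lra. }
    pose proof (Rabs_pos (u t k - phi F M u0 u k t)).
    assert (Rabs (u t k - phi F M u0 u k t) = 0) by lra.
    apply Rabs_eq_0 in H1. lra. }
  assert (HD : forall k t, 0 < t -> is_derive (fun s => u s k) t (-(2*M) * u t k + Hop F M (u t) k)).
  { intros k t Ht. rewrite (HI t k) at 1 by lra.
    apply (is_derive_ext_loc (K:=R_AbsRing) (V:=R_NormedModule) (phi F M u0 u k)).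
    - exists (mkposreal t Ht). intros y Hy. unfold ball in Hy; simpl in Hy. unfold AbsRing_ball, abs, minus, plus, opp in Hy; simpl in Hy.
      apply Rabs_lt_between in Hy. symmetry. apply HI. lra.
    - eapply phi_deriv; eauto; lra. }
  exists u. split; [exact Hb|]. split; [exact HTL|]. split.
  { intros k. apply ulim_0. }
  intros k t Ht. split; [apply HD; auto|].
  apply (continuous_ext_loc (T:=R_UniformSpace) (U:=R_UniformSpace) _ (fun s => -(2*M) * u s k + Hop F M (u s) k)).
  - exists (mkposreal t Ht). intros y Hy. unfold ball in Hy; simpl in Hy. unfold AbsRing_ball, abs, minus, plus, opp in Hy; simpl in Hy.
    apply Rabs_lt_between in Hy. symmetry. apply is_derive_unique. apply HD. lra.
  - apply lip_cont with (K := 2*M*(2*M*(b-a)) + 6*M*(2*M*(b-a))). intros y.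
    assert (Rabs (Hop F M (u y) k - Hop F M (u t) k) <= 6*M*(2*M*(b-a)*Rabs (y - t))).
    { apply Hop_lip; [auto|lra|]. intros j; apply HTL. }
    pose proof (HTL y t k).
    replace (-(2*M) * u y k + Hop F M (u y) k - (-(2*M) * u t k + Hop F M (u t) k))
      with (-(2*M) * (u y k - u t k) + (Hop F M (u y) k - Hop F M (u t) k)) by ring.
    eapply Rle_trans. apply Rabs_triang. rewrite Rabs_mult.
    rewrite Rabs_Ropp, (Rabs_pos_eq (2*M)) by lra.
    assert (2*M * Rabs (u y k - u t k) <= 2*M*(2*M*(b-a)*Rabs (y-t))) by (apply Rmult_le_compat_l; lra).
    lra.
Qed.

Lemma Rpower_le_negexp a c e : 0 < a -> a <= c -> e <= 0 -> Rpower c e <= Rpower a e.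
Proof.
  intros Ha Hc He. unfold Rpower. apply exp_le_mono.
  pose proof (ln_le a c Ha Hc). nra.
Qed.

Lemma G_mono_lip beta a x y : (beta < 0 \/ (0 < beta /\ beta <= 1)) -> 0 < a -> a <= x -> x <= y ->
  0 <= G beta y - G beta x <= Rabs beta * Rpower a (beta - 1) * (y - x).
Proof.
  intros Hbeta Ha Hx Hxy.
  assert (Hb0 : beta <> 0) by lra.
  assert (Hder : forall z, 0 < z -> is_derive (G beta) z (beta / Rabs beta * (beta * Rpower z (beta - 1)))).
  { intros z Hz. unfold G. apply is_derive_scal. apply is_derive_Reals. apply derivable_pt_lim_power; auto. }
  destruct (MVT_gen (G beta) x y (fun z => beta / Rabs beta * (beta * Rpower z (beta - 1)))) as [c [Hc E]].
  - intros z Hz. rewrite Rmin_left in Hz by lra. apply Hder. lra.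
  - intros z Hz. rewrite Rmin_left in Hz by lra. apply continuity_pt_filterlim.
    apply (ex_derive_continuous (K:=R_AbsRing) (V:=R_NormedModule)). eexists. apply Hder. lra.
  - rewrite Rmin_left in Hc by lra. rewrite Rmax_right in Hc by lra.
    rewrite E.
    assert (Eb : beta / Rabs beta * beta = Rabs beta).
    { destruct Hbeta as [h|h]; [rewrite Rabs_left by lra | rewrite Rabs_right by lra]; field; lra. }
    replace (beta / Rabs beta * (beta * Rpower c (beta - 1)) * (y - x)) with ((beta / Rabs beta * beta) * Rpower c (beta - 1) * (y - x))
      by ring.
    rewrite Eb.
    assert (0 < Rabs beta) by (apply Rabs_pos_lt; auto).
    assert (0 < Rpower c (beta - 1)) by (unfold Rpower; apply exp_pos).
    assert (Rpower c (beta - 1) <= Rpower a (beta - 1)) by (apply Rpower_le_negexp; lra).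
    split.
    + apply Rmult_le_pos; [|lra]. apply Rmult_le_pos; lra.
    + apply Rmult_le_compat_r; [lra|]. apply Rmult_le_compat_l; lra.
Qed.

Lemma clamp_id d C v : d <= v <= C -> Rmax d (Rmin C v) = v.
Proof. intros H. rewrite Rmin_right by lra. rewrite Rmax_right by lra. reflexivity. Qed.

Theorem corollaryA5 (beta : R) (u0 : Z -> R) (delta C : R) :
  (beta < 0 \/ (0 < beta /\ beta <= 1)) ->
  linf_plus u0 ->
  0 < delta ->
  (forall k, delta <= u0 k /\ u0 k <= C) ->
  exists u : R -> Z -> R,
    is_solution beta u0 u /\
    (forall t k, 0 <= t -> delta <= u t k /\ u t k <= C).
Proof.
  intros Hbeta _ Hd Hu0.
  assert (HdC : delta <= C) by (destruct (Hu0 0%Z); lra).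
  set (F := fun x => G beta (Rmax delta (Rmin C x))).
  set (M := Rabs beta * Rpower delta (beta - 1)).
  assert (HM : 0 < M).
  { unfold M. apply Rmult_lt_0_compat. apply Rabs_pos_lt; lra. unfold Rpower; apply exp_pos. }
  assert (HF : HFp F M).
  { intros x y Hxy. unfold F.
    set (cx := Rmax delta (Rmin C x)). set (cy := Rmax delta (Rmin C y)).
    assert (Hcx : delta <= cx) by apply Rmax_l.
    assert (Hc : cx <= cy /\ cy - cx <= y - x).
    { unfold cx, cy, Rmax, Rmin. repeat destruct (Rle_dec _ _); lra. }
    pose proof (G_mono_lip beta delta cx cy Hbeta Hd Hcx (proj1 Hc)).
    fold M in H. split; [lra|].
    assert (M * (cy - cx) <= M * (y - x)) by (apply Rmult_le_compat_l; lra). lra. }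
  destruct (abstract_sol F M delta C u0 HF HM Hu0) as [u [Hb [HTL [H0 HD]]]].
  exists u. split.
  - split; [|split; [|split]].
    + intros t _. split.
      * intros k. pose proof (Hb t k). lra.
      * exists C. intros k. pose proof (Hb t k). rewrite Rabs_pos_eq; lra.
    + intros t0 _ eps He.
      set (K := 2 * M * (C - delta)).
      assert (HK : 0 <= K) by (unfold K; nra).
      exists (eps / (K + 1)). split.
      * apply Rdiv_lt_0_compat; lra.
      * intros t _ Ht k. eapply Rle_trans. apply HTL.
        fold K. apply Rle_trans with (K * (eps / (K + 1))).
        -- apply Rmult_le_compat_l; lra.
        -- apply Rmult_le_reg_r with (K + 1); [lra|].
           replace (K * (eps / (K + 1)) * (K + 1)) with (K * eps) by (field; lra). nra.
    + apply functional_extensionality. intros k. apply H0.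
    + intros k t Ht. destruct (HD k t Ht) as [D1 D2].
      split; [pose proof (Hb t k); lra|]. split; [|exact D2].
      eapply is_derive_eq. exact D1.
      unfold dlap, Hop, F.
      rewrite !clamp_id by apply Hb. lra.
  - intros t k _. apply Hb.
Qed.
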